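(* For all real $x\ge4$, $H'(x)>\dfrac{H(x)\log(H(x))}{x^2}$.
   Context: $H(x)=\int_0^1\frac{t^x-1}{t-1}\,dt$ for real $x\ge1$; it is smooth, satisfies $H(n)=1+\frac12+\cdots+\frac1n$ for $n\in\mathbb{N}$, and $H(x)=\psi(x+1)+\gamma$ with $\psi=\Gamma'/\Gamma$ the digamma function, so $H'(x)=\psi'(x+1)$. *)

(* Defs.v *)
From Stdlib Require Import Reals.
From Coquelicot Require Import Coquelicot.
Open Scope R_scope.

(* H(x) = \int_0^1 (t^x - 1)/(t - 1) dt, with t^x = Rpower t x
   (the values of the integrand at the endpoints t = 0, t = 1 are
   irrelevant for the Riemann integral). *)
Definition H (x : R) : R :=
  RInt (fun t => (Rpower t x - 1) / (t - 1)) 0 1.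

(* Main.v *)
Require Import Defs.
From Stdlib Require Import Reals Lra Psatz.
From Coquelicot Require Import Coquelicot.
Open Scope R_scope.

Lemma ln_0 : ln 0 = 0.
Proof. unfold ln. destruct (Rlt_dec 0 0). - exfalso; lra. - reflexivity. Qed.

Lemma ln_le_sub1 t : 0 < t -> ln t <= t - 1.
Proof. intros. pose proof (exp_ineq1_le (ln t)). rewrite exp_ln in H0; lra. Qed.

Lemma ln_ge_1inv t : 0 < t -> 1 - / t <= ln t.
Proof. intros. pose proof (ln_le_sub1 (/ t) (Rinv_0_lt_compat _ H)).
  rewrite ln_Rinv in H0; lra. Qed.

Lemma exp_taylor_up a : exp a - 1 - a <= a * (exp a - 1).
Proof.
  pose proof (exp_ineq1_le (-a)). rewrite exp_Ropp in H.
  pose proof (exp_pos a).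
  assert (exp a * (1 - a) <= 1).
  { apply Rmult_le_reg_r with (/ exp a). apply Rinv_0_lt_compat; lra.
    rewrite Rmult_comm, <- Rmult_assoc, Rinv_l by lra. lra. }
  nra.
Qed.

Lemma exp_neg_up a : a <= 0 -> exp a <= 1 + a + a ^ 2.
Proof. intros. pose proof (exp_taylor_up a). pose proof (exp_ineq1_le a). nra. Qed.

Lemma exp_mono a b : a <= b -> exp a <= exp b.
Proof. intros [H|H]; [left; apply exp_increasing; auto | subst; lra]. Qed.

Lemma exp3 t : 0 < t -> exp (3 * ln t) = t ^ 3.
Proof. intros. replace (3 * ln t) with (ln t + ln t + ln t) by ring.
  rewrite !exp_plus, exp_ln; auto; ring. Qed.

Lemma exp_nat t (n:nat) : 0 < t -> exp (INR n * ln t) = t ^ n.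
Proof. intros. rewrite <- ln_pow by auto. apply exp_ln. apply pow_lt; auto. Qed.

Lemma ex_RInt_01 (f : R -> R) (c0 c1 K : R) :
  0 <= K ->
  (forall z, 0 < z < 1 -> continuous f z) ->
  (forall t, 0 < t <= 1/2 -> Rabs (f t - c0) <= K * t) ->
  (forall t, 1/2 <= t < 1 -> Rabs (f t - c1) <= K * (1 - t)) ->
  ex_RInt f 0 1.
Proof.
  intros HK Hc H0 H1.
  set (g t := match Rle_dec t 0 with left _ => c0 | right _ =>
              match Rle_dec 1 t with left _ => c1 | right _ => f t end end).
  apply ex_RInt_ext with g.
  { intros t Ht. rewrite Rmin_left, Rmax_right in Ht by lra.
    unfold g. destruct (Rle_dec t 0). - lra. - destruct (Rle_dec 1 t). + lra. + reflexivity. }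
  apply (@ex_RInt_continuous R_CompleteNormedModule). intros z Hz. rewrite Rmin_left, Rmax_right in Hz by lra.
  destruct (Req_dec z 0) as [->|Hz0].
  { apply continuity_pt_filterlim. intros eps Heps.
    exists (Rmin (1/2) (eps / (K + 1))). split.
    { apply Rmin_pos; [lra| apply Rdiv_lt_0_compat; lra]. }
    intros t [[_ Ht] Hd]. simpl in Hd |- *; unfold R_dist in *; rewrite ?Rminus_0_r in Hd.
    assert (Hm1 := Rmin_l (1/2) (eps / (K + 1))). assert (Hm2 := Rmin_r (1/2) (eps / (K + 1))).
    unfold g. destruct (Rle_dec 0 0); [|lra].
    destruct (Rle_dec t 0).
    - rewrite Rminus_diag, Rabs_R0; lra.
    - destruct (Rle_dec 1 t). { apply Rabs_def2 in Hd; lra. }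
      apply Rabs_def2 in Hd.
      eapply Rle_lt_trans. apply H0; lra.
      assert (t < eps / (K+1)) by lra.
      apply Rlt_le_trans with ((K+1) * t). nra.
      apply Rle_trans with ((K+1) * (eps / (K+1))). nra.
      right; field; lra. }
  destruct (Req_dec z 1) as [->|Hz1].
  { apply continuity_pt_filterlim. intros eps Heps.
    exists (Rmin (1/2) (eps / (K + 1))). split.
    { apply Rmin_pos; [lra| apply Rdiv_lt_0_compat; lra]. }
    intros t [[_ Ht] Hd]. simpl in Hd |- *; unfold R_dist in *.
    assert (Hm1 := Rmin_l (1/2) (eps / (K + 1))). assert (Hm2 := Rmin_r (1/2) (eps / (K + 1))).
    unfold g. destruct (Rle_dec 1 0); [lra|]. destruct (Rle_dec 1 1); [|lra].
    apply Rabs_def2 in Hd.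
    destruct (Rle_dec t 0). { lra. }
    destruct (Rle_dec 1 t).
    - rewrite Rminus_diag, Rabs_R0; lra.
    - eapply Rle_lt_trans. apply H1; lra.
      assert (1 - t < eps / (K+1)) by lra.
      apply Rlt_le_trans with ((K+1) * (1 - t)). nra.
      apply Rle_trans with ((K+1) * (eps / (K+1))). nra.
      right; field; lra. }
  assert (Hz' : 0 < z < 1) by lra.
  apply continuous_ext_loc with f; [| apply Hc; auto].
  assert (Hp : 0 < Rmin z (1 - z)) by (apply Rmin_pos; lra).
  exists (mkposreal _ Hp). intros y Hy. simpl in Hy.
  change (Rabs (y - z) < Rmin z (1 - z)) in Hy.
  assert (Hm1 := Rmin_l z (1 - z)). assert (Hm2 := Rmin_r z (1 - z)).
  apply Rabs_def2 in Hy.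
  unfold g. destruct (Rle_dec y 0). lra. destruct (Rle_dec 1 y). lra. reflexivity.
Qed.

Lemma Pexp_le t y (k : nat) : 0 < t <= 1 -> INR k <= y -> exp (y * ln t) <= t ^ k.
Proof.
  intros Ht Hy. rewrite <- exp_nat by lra. apply exp_mono.
  assert (ln t <= 0) by (pose proof (ln_le_sub1 t); lra). nra.
Qed.

Lemma cont_generic (F : R -> R -> R) y z : 0 < z < 1 ->
  (forall t, F y t = exp (y * ln t)) -> True.
Proof. auto. Qed.

Lemma Lbounds t : 0 < t < 1 -> ln t <= t - 1 /\ - ln t <= (1 - t) / t.
Proof.
  intros Ht. split. apply ln_le_sub1; lra.
  pose proof (ln_ge_1inv t). assert ((1 - t) / t = / t - 1) by (field; lra). lra.
Qed.

Lemma ex_RInt_fH y : 1 <= y -> ex_RInt (fun t => (Rpower t y - 1) / (t - 1)) 0 1.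
Proof.
  intros Hy.
  apply ex_RInt_01 with 1 y (2 + 2 * y + 4 * y ^ 2). nra.
  - intros z Hz. apply (@ex_derive_continuous R_AbsRing R_NormedModule).
    unfold Rpower. auto_derive. lra.
  - intros t Ht. unfold Rpower.
    assert (HP := Pexp_le t y 1 ltac:(lra) ltac:(simpl; lra)).
    assert (HP0 := exp_pos (y * ln t)). set (P := exp (y * ln t)) in *.
    replace ((P - 1) / (t - 1) - 1) with ((t - P) / (1 - t)) by (field; lra).
    rewrite Rabs_pos_eq. 2: { apply Rdiv_le_0_compat; simpl in HP; lra. }
    rewrite Rle_div_l by lra. simpl in HP. assert (HK: 2 <= 2 + 2 * y + 4 * y ^ 2) by nra. assert (0 <= (2 + 2 * y + 4 * y ^ 2 - 2) * (t * (1 - t))) by (apply Rmult_le_pos; nra). nra.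
  - intros t Ht. unfold Rpower.
    destruct (Lbounds t) as [L1 L2]. lra.
    assert (L3 : (1 - t) / t <= 2 * (1 - t)).
    { rewrite Rle_div_l by lra; nra. }
    set (L := ln t) in *. set (s := 1 - t).
    pose proof (exp_ineq1_le (y * L)). pose proof (exp_neg_up (y * L) ltac:(nra)).
    set (P := exp (y * L)) in *.
    replace ((P - 1) / (t - 1) - y) with ((1 - P - y * s) / s) by (unfold s; field; lra).
    rewrite Rabs_div by (unfold s; lra). rewrite (Rabs_pos_eq s) by (unfold s; lra).
    rewrite Rle_div_l by (unfold s; lra).
    apply Rabs_le. split.
    +
      assert (L2' : - L <= 2 * s) by (unfold s in *; lra).
      assert (L^2 <= 4 * s^2) by (unfold s in *; nra).
      assert (- L >= s) by (unfold s; lra).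
      assert (y ^ 2 * L ^ 2 <= y^2 * (4 * s^2)) by (apply Rmult_le_compat_l; nra).
      unfold s in *; nra.
    + assert (- L <= s / t) by (unfold s; lra).
      assert (y * (-L) <= y * (s / t)) by (apply Rmult_le_compat_l; lra).
      assert (s / t - s = s * s / t) by (unfold s; field; lra).
      assert (s * s / t <= 2 * s * s). { assert (Hi: / t <= 2) by (rewrite <- (Rinv_inv 2); apply Rinv_le_contravar; lra). unfold Rdiv. assert (0 <= s * s) by (unfold s; nra). nra. }
      unfold s in *; nra.
Qed.

Lemma ex_RInt_pow y : 1 <= y -> ex_RInt (fun t => exp (y * ln t)) 0 1.
Proof.
  intros Hy.
  apply ex_RInt_01 with 0 1 (2 * y). lra.
  - intros z Hz. apply (@ex_derive_continuous R_AbsRing R_NormedModule).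
    auto_derive. lra.
  - intros t Ht.
    assert (HP := Pexp_le t y 1 ltac:(lra) ltac:(simpl; lra)).
    assert (HP0 := exp_pos (y * ln t)). simpl in HP.
    rewrite Rminus_0_r, Rabs_pos_eq by lra. nra.
  - intros t Ht.
    destruct (Lbounds t) as [L1 L2]. lra.
    assert (L3 : (1 - t) / t <= 2 * (1 - t)).
    { assert (Hi: / t <= 2) by (rewrite <- (Rinv_inv 2); apply Rinv_le_contravar; lra).
      unfold Rdiv. nra. }
    assert (HP := Pexp_le t y 0 ltac:(lra) ltac:(simpl; lra)). simpl in HP.
    pose proof (exp_ineq1_le (y * ln t)).
    rewrite Rabs_left1 by lra.
    assert (y * - ln t <= y * (2 * (1 - t))) by (apply Rmult_le_compat_l; lra).
    nra.
Qed.

Lemma ex_RInt_dH x : 2 <= x -> ex_RInt (fun t => Rpower t x * ln t / (t - 1)) 0 1.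
Proof.
  intros Hx. unfold Rpower.
  apply ex_RInt_01 with 0 1 (2 + 4 * x). lra.
  - intros z Hz. apply (@ex_derive_continuous R_AbsRing R_NormedModule).
    auto_derive. lra.
  - intros t Ht.
    destruct (Lbounds t) as [L1 L2]. lra.
    assert (HP := Pexp_le t x 2 ltac:(lra) ltac:(simpl; lra)).
    assert (HP0 := exp_pos (x * ln t)). simpl in HP.
    set (L := ln t) in *. set (P := exp (x * L)) in *.
    rewrite Rminus_0_r.
    replace (P * L / (t - 1)) with (P * (- L) / (1 - t)) by (field; lra).
    assert (0 <= - L) by lra.
    rewrite Rabs_pos_eq by (apply Rdiv_le_0_compat; nra).
    rewrite Rle_div_l by lra.
    assert (P * - L <= t * t * ((1 - t) / t)) by (apply Rmult_le_compat; nra).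
    replace (t * t * ((1 - t) / t)) with (t * (1 - t)) in H0 by (field; lra).
    assert (0 <= 4 * x * t * (1 - t)) by (apply Rmult_le_pos; nra). nra.
  - intros t Ht.
    destruct (Lbounds t) as [L1 L2]. lra.
    assert (L3 : (1 - t) / t <= 2 * (1 - t)).
    { assert (Hi: / t <= 2) by (rewrite <- (Rinv_inv 2); apply Rinv_le_contravar; lra).
      unfold Rdiv. nra. }
    assert (HP := Pexp_le t x 0 ltac:(lra) ltac:(simpl; lra)). simpl in HP.
    pose proof (exp_ineq1_le (x * ln t)).
    set (L := ln t) in *. set (P := exp (x * L)) in *. set (s := 1 - t) in *.
    replace (P * L / (t - 1) - 1) with ((P * (- L) - s) / s) by (unfold s; field; lra).
    rewrite Rabs_div by (unfold s; lra). rewrite (Rabs_pos_eq s) by (unfold s; lra).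
    rewrite Rle_div_l by (unfold s; lra).
    assert (Hs : 0 < s) by (unfold s; lra).
    assert (HL : s <= - L) by (unfold s; lra).
    assert (HL2 : - L <= 2 * s) by lra.
    apply Rabs_le. split.
    + assert (P * (-L) >= (1 + x * L) * (-L)) by (apply Rle_ge, Rmult_le_compat_r; lra).
      assert (x * (L * L) <= x * (4 * s * s)) by (apply Rmult_le_compat_l; nra).
      nra.
    + assert (P * (-L) <= - L) by nra.
      assert (-L - s <= s * s / t).
      { 
        assert (s / t - s = s * s / t) by (unfold s; field; lra). lra. }
      assert (s * s / t <= 2 * s * s).
      { assert (Hi: / t <= 2) by (rewrite <- (Rinv_inv 2); apply Rinv_le_contravar; lra).
        unfold Rdiv. nra. }
      nra.
Qed.

Lemma pw_bound x h t : 3 <= x -> -1 <= h <= 1 -> 0 < t < 1 ->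
  Rabs ((Rpower t (x + h) - 1) / (t - 1) - (Rpower t x - 1) / (t - 1)
        - h * (Rpower t x * ln t / (t - 1))) <= h ^ 2.
Proof.
  intros Hx Hh Ht. unfold Rpower.
  destruct (Lbounds t Ht) as [L1 L2].
  assert (HP := Pexp_le t x 3 ltac:(lra) ltac:(simpl; lra)).
  assert (HP0 := exp_pos (x * ln t)).
  set (L := ln t) in *.
  rewrite Rmult_plus_distr_r, exp_plus.
  set (P := exp (x * L)) in *. set (a := h * L).
  assert (Hlt0 : L < 0) by lra.
  replace ((P * exp a - 1) / (t - 1) - (P - 1) / (t - 1) - h * (P * L / (t - 1)))
    with (P * (exp a - 1 - a) / (t - 1)) by (unfold a; field; lra).
  pose proof (exp_ineq1_le a).
  rewrite Rabs_div by lra. rewrite Rabs_pos_eq by (apply Rmult_le_pos; lra).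
  rewrite Rabs_left by lra.
  rewrite Rle_div_l by lra.
  assert (Ha : exp a - 1 - a <= a ^ 2 / t).
  { pose proof (exp_taylor_up a).
    destruct (Rle_dec a 0).
    - assert (a * (exp a - 1) <= a * a) by nra.
      assert (a ^ 2 <= a ^ 2 / t).
      { unfold Rdiv. assert (1 <= / t) by (rewrite <- Rinv_1; apply Rinv_le_contravar; lra). nra. }
      nra.
    - assert (exp a <= / t).
      { rewrite <- exp_ln with (/ t) by (apply Rinv_0_lt_compat; lra).
        apply exp_mono. rewrite ln_Rinv by lra. change (ln t) with L. unfold a; nra. }
      pose proof (exp_ineq1_le (-a)). rewrite exp_Ropp in H2.
      assert (exp a * (1 - a) <= 1).
      { pose proof (exp_pos a).
        apply Rmult_le_reg_r with (/ exp a). apply Rinv_0_lt_compat; lra.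
        rewrite Rmult_comm, <- Rmult_assoc, Rinv_l by lra. lra. }
      assert (exp a - 1 <= a * exp a) by lra.
      assert (a * (exp a - 1) <= a * (a * exp a)) by (apply Rmult_le_compat_l; lra).
      assert (a * (a * exp a) <= a * (a * / t)) by (apply Rmult_le_compat_l; [lra|]; apply Rmult_le_compat_l; lra).
      unfold Rdiv. nra. }
  assert (Ha2 : a ^ 2 <= h ^ 2 * ((1 - t) / t) ^ 2).
  { unfold a. rewrite Rpow_mult_distr. apply Rmult_le_compat_l. nra.
    assert (0 <= - L) by lra. replace (L ^ 2) with ((- L) ^ 2) by ring.
    apply pow_incr. lra. }
  assert (E1 : P * (exp a - 1 - a) <= t ^ 3 * (a ^ 2 / t)).
  { apply Rmult_le_compat; lra. }
  assert (E2 : t ^ 3 * (a ^ 2 / t) <= t ^ 3 * (h ^ 2 * ((1 - t) / t) ^ 2 / t)).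
  { apply Rmult_le_compat_l. simpl; nra. unfold Rdiv. apply Rmult_le_compat_r.
    left; apply Rinv_0_lt_compat; lra. lra. }
  replace (t ^ 3 * (h ^ 2 * ((1 - t) / t) ^ 2 / t)) with (h ^ 2 * (1 - t) * (1 - t)) in E2 by (field; lra).
  assert (0 <= h ^ 2 * (1 - t) * t) by (apply Rmult_le_pos; [apply Rmult_le_pos|]; nra).
  nra.
Qed.

Lemma fH_end0 y : (Rpower 0 y - 1) / (0 - 1) = 0.
Proof. unfold Rpower. rewrite ln_0, Rmult_0_r, exp_0. field. Qed.

Lemma H_deriv x : 3 <= x ->
  is_derive H x (RInt (fun t => Rpower t x * ln t / (t - 1)) 0 1).
Proof.
  intros Hx. apply is_derive_Reals. intros eps Heps.
  assert (Hd : 0 < Rmin 1 eps) by (apply Rmin_pos; lra).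
  exists (mkposreal _ Hd). intros h Hh0 Hh. simpl in Hh.
  assert (Hm1 := Rmin_l 1 eps). assert (Hm2 := Rmin_r 1 eps).
  apply Rabs_def2 in Hh as Hh'.
  set (D := RInt (fun t => Rpower t x * ln t / (t - 1)) 0 1).
  set (g := fun t => (Rpower t (x + h) - 1) / (t - 1) - (Rpower t x - 1) / (t - 1)
        - h * (Rpower t x * ln t / (t - 1))).
  assert (I1 := ex_RInt_fH (x + h) ltac:(lra)).
  assert (I2 := ex_RInt_fH x ltac:(lra)).
  assert (I3 := ex_RInt_dH x ltac:(lra)).
  assert (Ig : ex_RInt g 0 1).
  { apply (@ex_RInt_minus R_NormedModule). apply (@ex_RInt_minus R_NormedModule); auto.
    apply (@ex_RInt_scal R_NormedModule); auto. }
  assert (E : RInt g 0 1 = H (x + h) - H x - h * D).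
  { unfold g, H, D.
    rewrite (@RInt_minus R_CompleteNormedModule); auto.
    2: { apply (@ex_RInt_minus R_NormedModule); auto. }
    2: { apply (@ex_RInt_scal R_NormedModule); auto. }
    rewrite (@RInt_minus R_CompleteNormedModule); auto.
    rewrite (@RInt_scal R_CompleteNormedModule); auto. }
  assert (B : Rabs (RInt g 0 1) <= (1 - 0) * h ^ 2).
  { apply abs_RInt_le_const. lra. auto.
    intros t Ht. unfold g.
    destruct (Req_dec t 0) as [->|Ht0].
    { rewrite !fH_end0. unfold Rpower. rewrite ln_0. 
      replace (0 - 1) with (-1) by ring. rewrite Rabs_pos_eq; nra. }
    destruct (Req_dec t 1) as [->|Ht1].
    { unfold Rdiv. rewrite Rminus_diag, Rinv_0, !Rmult_0_r, Rminus_0_r, Rminus_0_r, Rabs_R0. nra. }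
    apply pw_bound; lra. }
  rewrite E in B.
  replace ((H (x + h) - H x) / h - D) with ((H (x + h) - H x - h * D) / h) by (field; lra).
  rewrite Rabs_div by lra.
  apply Rle_lt_trans with (Rabs h).
  - rewrite Rle_div_l by (apply Rabs_pos_lt; lra).
    replace ((1 - 0) * h ^ 2) with (Rabs h * Rabs h) in B. lra.
    rewrite <- Rabs_mult, Rabs_pos_eq by nra. ring.
  - lra.
Qed.

Lemma RInt_FTC (F f : R -> R) a b : a <= b ->
  (forall t, a <= t <= b -> is_derive F t (f t)) ->
  (forall t, a <= t <= b -> continuous f t) ->
  ex_RInt f a b /\ @eq R (RInt f a b) (F b - F a).
Proof.
  intros Hab HD HC.
  assert (Hi : is_RInt f a b (minus (F b) (F a))).
  { apply (@is_RInt_derive R_CompleteNormedModule).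
    - intros t Ht. rewrite Rmin_left, Rmax_right in Ht by lra. auto.
    - intros t Ht. rewrite Rmin_left, Rmax_right in Ht by lra. auto. }
  split. eexists; eauto. rewrite (@is_RInt_unique R_CompleteNormedModule _ _ _ _ Hi). reflexivity.
Qed.

Lemma LN y : 1 <= y -> ln y <= (y - / y) / 2.
Proof.
  intros Hy.
  destruct (RInt_FTC ln (fun s => / s) 1 y Hy) as [I1 E1].
  { intros t Ht. apply is_derive_ln. lra. }
  { intros t Ht. apply (@ex_derive_continuous R_AbsRing R_NormedModule). auto_derive. lra. }
  destruct (RInt_FTC (fun s => (s - / s) / 2) (fun s => (1 + / s ^ 2) / 2) 1 y Hy) as [I2 E2].
  { intros t Ht. auto_derive. lra. field. lra. }
  { intros t Ht. apply (@ex_derive_continuous R_AbsRing R_NormedModule). auto_derive. nra. }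
  assert (RInt (fun s => / s) 1 y <= RInt (fun s => (1 + / s ^ 2) / 2) 1 y).
  { apply RInt_le; auto. intros t Ht.
    assert (0 <= (1 - / t) ^ 2) by apply pow2_ge_0.
    replace ((1 + / t ^ 2) / 2) with (/ t + (1 - / t) ^ 2 / 2) by (field; lra). lra. }
  rewrite E1, E2, ln_1 in H. simpl in H. replace ((1 - / 1) / 2) with 0 in H by (field). lra.
Qed.

Lemma Int_pow x : 1 <= x ->
  RInt (fun t => exp (x * ln t)) (1/4) 1 = (1 - exp ((x + 1) * ln (1/4))) / (x + 1)
  /\ ex_RInt (fun t => exp (x * ln t)) (1/4) 1.
Proof.
  intros Hx.
  destruct (RInt_FTC (fun t => exp ((x + 1) * ln t) / (x + 1)) (fun t => exp (x * ln t)) (1/4) 1) as [I E].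
  lra.
  { intros t Ht. auto_derive. lra.
    replace ((x + 1) * ln t) with (x * ln t + ln t) by ring. rewrite exp_plus, exp_ln by lra. field. lra. }
  { intros t Ht. apply (@ex_derive_continuous R_AbsRing R_NormedModule). auto_derive. lra. }
  split; auto. rewrite E, ln_1, Rmult_0_r, exp_0. change (1 / (x + 1) - exp ((x + 1) * ln (1 / 4)) / (x + 1) = (1 - exp ((x + 1) * ln (1 / 4))) / (x + 1)). field; lra.
Qed.

Lemma c_bounds x : 1 <= x -> 0 < x / (x + 1) < 1.
Proof.
  intros Hx. assert (E : x / (x + 1) = 1 - / (x + 1)) by (field; lra).
  assert (0 < / (x + 1)) by (apply Rinv_0_lt_compat; lra).
  assert (/ (x + 1) < 1) by (rewrite <- Rinv_1; apply Rinv_lt_contravar; lra). lra.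
Qed.

Lemma Int_inv1 x : 1 <= x ->
  @eq R (RInt (fun t => / (1 - t)) 0 (x / (x + 1))) (ln (x + 1))
  /\ ex_RInt (fun t => / (1 - t)) 0 (x / (x + 1)).
Proof.
  intros Hx.
  destruct (c_bounds x Hx) as [Hc0 Hc].
  destruct (RInt_FTC (fun t => - ln (1 - t)) (fun t => / (1 - t)) 0 (x / (x + 1))) as [I E].
  lra.
  { intros t Ht. auto_derive. lra. field. lra. }
  { intros t Ht. apply (@ex_derive_continuous R_AbsRing R_NormedModule). auto_derive. lra. }
  split; auto. rewrite E. replace (1 - x / (x + 1)) with (/ (x + 1)) by (field; lra).
  rewrite ln_Rinv by lra. rewrite Rminus_0_r, ln_1. ring.
Qed.

Lemma Int_xinv x : 1 <= x ->
  @eq R (RInt (fun t => x / t) (x / (x + 1)) 1) (- x * ln (x / (x + 1)))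
  /\ ex_RInt (fun t => x / t) (x / (x + 1)) 1.
Proof.
  intros Hx.
  destruct (c_bounds x Hx) as [Hc0 Hc].
  destruct (RInt_FTC (fun t => x * ln t) (fun t => x / t) (x / (x + 1)) 1) as [I E].
  lra.
  { intros t Ht. auto_derive. lra. field. lra. }
  { intros t Ht. apply (@ex_derive_continuous R_AbsRing R_NormedModule). auto_derive. lra. }
  split; auto. rewrite E, ln_1. ring.
Qed.

Lemma cubic p : 2236/1000 <= p -> 2*p*(4*p - 3/4)/3 < 1023/1024*(p-1)*(p+1)^2.
Proof. intros. set (e := p - 2236/1000). assert (0 <= e) by (unfold e; lra).
replace p with (2236/1000 + e) by (unfold e; ring). nra. Qed.

Lemma num_q q : 0 < q -> 5 <= q ^ 4 ->
  2 * (q - / q) * (2 * (q - / q) + 2) / 2 < 1023 / 1024 * ((q ^ 4 - 1) ^ 2 / q ^ 4).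
Proof.
  intros Hq H5. set (p := q * q).
  assert (Hp4 : q ^ 4 = p * p) by (unfold p; ring).
  rewrite Hp4 in *.
  assert (Hp0 : 0 < p) by (unfold p; nra).
  assert (Hp : 2236/1000 <= p) by nra.
  assert (Hqp : q <= (p + 9/4) / 3) by (assert (0 <= (q - 3/2) ^ 2) by apply pow2_ge_0; unfold p; nra).
  assert (C := cubic p Hp).
  assert (K : 2 * p * (p + q - 1) < 1023/1024*(p-1)*(p+1)^2).
  { assert (2 * p * (p + q - 1) <= 2*p*(4*p - 3/4)/3) by nra. lra. }
  replace (2 * (q - / q) * (2 * (q - / q) + 2) / 2)
    with ((2 * p * (p + q - 1)) * (p - 1) / (p * p)) by (unfold p; field; lra).
  replace (1023 / 1024 * ((p * p - 1) ^ 2 / (p * p)))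
    with ((1023/1024*(p-1)*(p+1)^2) * (p - 1) / (p * p)) by (field; lra).
  unfold Rdiv. apply Rmult_lt_compat_r. apply Rinv_0_lt_compat; nra.
  apply Rmult_lt_compat_r; lra.
Qed.

Lemma ln_nonpos y : y <= 0 -> ln y = 0.
Proof. intros. unfold ln. destruct (Rlt_dec 0 y). - exfalso; lra. - reflexivity. Qed.

Lemma D_lower x : 4 <= x ->
  1023 / 1024 / (x + 1) <= RInt (fun t => Rpower t x * ln t / (t - 1)) 0 1.
Proof.
  intros Hx.
  assert (Ip := ex_RInt_pow x ltac:(lra)).
  assert (Id := ex_RInt_dH x ltac:(lra)).
  assert (S1 : RInt (fun t => exp (x * ln t)) 0 1 <= RInt (fun t => Rpower t x * ln t / (t - 1)) 0 1).
  { apply RInt_le; auto. lra. intros t Ht. unfold Rpower.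
    destruct (Lbounds t Ht) as [L1 L2]. pose proof (exp_pos (x * ln t)).
    replace (exp (x * ln t) * ln t / (t - 1)) with (exp (x * ln t) * (- ln t / (1 - t))) by (field; lra).
    assert (1 <= - ln t / (1 - t)). { apply Rmult_le_reg_r with (1 - t). lra. replace (- ln t / (1 - t) * (1 - t)) with (- ln t) by (field; lra). lra. } nra. }
  assert (Ia : ex_RInt (fun t => exp (x * ln t)) 0 (1/4)).
  { apply (@ex_RInt_Chasles_1 R_CompleteNormedModule) with 1. lra. auto. }
  assert (Ib : ex_RInt (fun t => exp (x * ln t)) (1/4) 1).
  { apply (@ex_RInt_Chasles_2 R_CompleteNormedModule) with 0. lra. auto. }
  assert (Ch := @RInt_Chasles R_CompleteNormedModule _ 0 (1/4) 1 Ia Ib).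
  assert (G0 : 0 <= RInt (fun t => exp (x * ln t)) 0 (1/4)).
  { apply RInt_ge_0; auto. lra. intros. left; apply exp_pos. }
  destruct (Int_pow x ltac:(lra)) as [E _].
  assert (HP := Pexp_le (1/4) (x + 1) 5 ltac:(lra) ltac:(simpl; lra)).
  assert (Hk : (1 - exp ((x + 1) * ln (1 / 4))) / (x + 1) >= 1023 / 1024 / (x + 1)).
  { unfold Rdiv. apply Rle_ge, Rmult_le_compat_r. left; apply Rinv_0_lt_compat; lra.
    simpl in HP. lra. }
  change (plus (RInt (fun t => exp (x * ln t)) 0 (1/4)) (RInt (fun t => exp (x * ln t)) (1/4) 1)
     = RInt (fun t => exp (x * ln t)) 0 1) in Ch.
  unfold plus in Ch; simpl in Ch.
  lra.
Qed.

Lemma H_upper x : 4 <= x -> H x <= 1 + ln (x + 1).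
Proof.
  intros Hx. unfold H.
  destruct (c_bounds x ltac:(lra)) as [Hc0 Hc]. set (c := x / (x + 1)) in *.
  assert (If := ex_RInt_fH x ltac:(lra)).
  assert (Ia : ex_RInt (fun t => (Rpower t x - 1) / (t - 1)) 0 c).
  { apply (@ex_RInt_Chasles_1 R_CompleteNormedModule) with 1. lra. auto. }
  assert (Ib : ex_RInt (fun t => (Rpower t x - 1) / (t - 1)) c 1).
  { apply (@ex_RInt_Chasles_2 R_CompleteNormedModule) with 0. lra. auto. }
  assert (Ch := @RInt_Chasles R_CompleteNormedModule _ 0 c 1 Ia Ib).
  change (plus (RInt (fun t => (Rpower t x - 1) / (t - 1)) 0 c) (RInt (fun t => (Rpower t x - 1) / (t - 1)) c 1)
     = RInt (fun t => (Rpower t x - 1) / (t - 1)) 0 1) in Ch.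
  unfold plus in Ch; simpl in Ch.
  destruct (Int_inv1 x ltac:(lra)) as [E1 I1].
  destruct (Int_xinv x ltac:(lra)) as [E2 I2].
  fold c in E1, I1, E2, I2.
  assert (B1 : RInt (fun t => (Rpower t x - 1) / (t - 1)) 0 c <= RInt (fun t => / (1 - t)) 0 c).
  { apply RInt_le; auto. lra. intros t Ht. unfold Rpower. pose proof (exp_pos (x * ln t)).
    assert (HP := Pexp_le t x 0 ltac:(lra) ltac:(simpl; lra)). simpl in HP.
    replace ((exp (x * ln t) - 1) / (t - 1)) with ((1 - exp (x * ln t)) * / (1 - t)) by (field; lra).
    assert (0 < / (1 - t)) by (apply Rinv_0_lt_compat; lra). nra. }
  assert (B2 : RInt (fun t => (Rpower t x - 1) / (t - 1)) c 1 <= RInt (fun t => x / t) c 1).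
  { apply RInt_le; auto. lra. intros t Ht. unfold Rpower.
    destruct (Lbounds t ltac:(lra)) as [L1 L2].
    pose proof (exp_ineq1_le (x * ln t)).
    assert (1 - exp (x * ln t) <= x * ((1 - t) / t)).
    { assert (x * (- ln t) <= x * ((1 - t) / t)) by (apply Rmult_le_compat_l; lra). lra. }
    replace ((exp (x * ln t) - 1) / (t - 1)) with ((1 - exp (x * ln t)) / (1 - t)) by (field; lra).
    replace (x / t) with (x * ((1 - t) / t) / (1 - t)) by (field; lra).
    unfold Rdiv at 1 3. apply Rmult_le_compat_r. left; apply Rinv_0_lt_compat; lra. lra. }
  assert (B3 : - x * ln c <= 1).
  { assert (ln c = - ln ((x + 1) / x)).
    { unfold c. rewrite <- ln_Rinv by (apply Rdiv_lt_0_compat; lra). f_equal. field. lra. }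
    assert (ln ((x + 1) / x) <= (x + 1) / x - 1) by (apply ln_le_sub1; apply Rdiv_lt_0_compat; lra).
    assert ((x + 1) / x - 1 = / x) by (field; lra).
    assert (x * / x = 1) by (field; lra).
    rewrite H. assert (x * ln ((x + 1) / x) <= x * / x) by (apply Rmult_le_compat_l; lra). lra. }
  lra.
Qed.

Theorem mainTheorem16 (x : R) (hx : 4 <= x) :
  Derive H x > H x * ln (H x) / x ^ 2.
Proof.
  rewrite (is_derive_unique _ _ _ (H_deriv x ltac:(lra))).
  set (D := RInt (fun t => Rpower t x * ln t / (t - 1)) 0 1).
  assert (HD := D_lower x hx). fold D in HD.
  assert (HU := H_upper x hx).
  assert (Hx2 : 0 < x ^ 2) by nra.
  set (h := H x) in *.
  assert (Hk : 0 < 1023 / 1024 / (x + 1)) by (apply Rdiv_lt_0_compat; lra).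
  assert (Key : h * ln h < x ^ 2 * (1023 / 1024 / (x + 1))).
  { destruct (Rle_dec h 1) as [Hh1|Hh1].
    - assert (h * ln h <= 0).
      { destruct (Rle_dec h 0) as [Hh0|Hh0].
        + rewrite ln_nonpos by auto. lra.
        + assert (ln h <= 0) by (rewrite <- ln_1; apply ln_le; lra). nra. }
      nra.
    - set (w := ln (x + 1)) in *.
      assert (Hw0 : 0 <= w) by (unfold w; rewrite <- ln_1; apply ln_le; lra).
      set (U := 1 + w) in *.
      assert (lnh : ln h <= ln U) by (apply ln_le; lra).
      assert (lnh0 : 0 <= ln h) by (rewrite <- ln_1; apply ln_le; lra).
      assert (LU := LN U ltac:(lra)).
      assert (S1 : h * ln h <= U * ((U - / U) / 2)).
      { apply Rmult_le_compat; lra. }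
      replace (U * ((U - / U) / 2)) with (w * (w + 2) / 2) in S1 by (unfold U; field; lra).
      set (p := sqrt (x + 1)). set (q := sqrt p).
      assert (Hp : 0 < p) by (apply sqrt_lt_R0; lra).
      assert (Hq : 0 < q) by (apply sqrt_lt_R0; lra).
      assert (Epp : p * p = x + 1) by (apply sqrt_sqrt; lra).
      assert (Eqq : q * q = p) by (apply sqrt_sqrt; lra).
      assert (Eq4 : q ^ 4 = x + 1) by (rewrite <- Epp, <- Eqq; ring).
      assert (Hp1 : 1 <= p) by nra. assert (Hq1 : 1 <= q) by nra.
      assert (Ew : w = 4 * ln q).
      { unfold w. rewrite <- Eq4, ln_pow by lra. simpl. ring. }
      assert (Lq := LN q Hq1).
      set (v := 2 * (q - / q)).
      assert (Hwv : w <= v) by (unfold v; lra).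
      assert (S2 : w * (w + 2) / 2 <= v * (v + 2) / 2) by nra.
      assert (N := num_q q Hq ltac:(lra)). fold v in N.
      rewrite Eq4 in N.
      replace (x + 1 - 1) with x in N by ring.
      replace (x ^ 2 * (1023 / 1024 / (x + 1))) with (1023 / 1024 * (x ^ 2 / (x + 1))) by (field; lra).
      lra. }
  apply Rlt_gt.
  apply Rle_lt_trans with (h * ln h / x ^ 2). lra.
  apply Rlt_le_trans with (1023 / 1024 / (x + 1)); [|lra].
  apply Rmult_lt_reg_r with (x ^ 2). auto.
  replace (h * ln h / x ^ 2 * x ^ 2) with (h * ln h) by (field; lra).
  lra.
Qed.
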